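(* Let $\mathcal{U}=\{u_1,\ldots,u_M\}\subset\mathbb{R}\setminus\{0\}$, $u_{\max}=\max_m|u_m|$, $\sigma_{N/k}^2>0$, and $k\ge1$. For $\omega\in\mathbb{R}$ let $h(\omega)=\sum_{m=1}^M\exp\big(\frac{|u_m|u_{\max}}{\sigma_{N/k}^2}-\frac{u_m^2}{2\sigma_{N/k}^2}+\frac{u_m\omega}{\sigma_{N/k}^2}\big)$. For an integer $n\ge 0$, $\omega_1\in\mathbb{R}^n$ and $s\in\{1,\ldots,n\}$ define $$G_s^n(\omega_1)=\sum_{x'\in\mathcal{X}_s^n(\mathcal{U})}\exp\Big(\frac{u_{\max}\|x'\|_1-\frac12\|x'\|_2^2+x'^{\mathrm{T}}\omega_1}{\sigma_{N/k}^2}\Big),$$ and $G_0^n(\omega_1)=1$. For $0\le a\le b\le n$ let $L_{a,b}^n=\prod_{i=0}^{b-a-1}\frac{b-i}{n-a-i}$ (empty product $=1$). For $j\in\{0,\ldots,k\}$ let $H_0(j)=1$ and, for $w\in\{1,\ldots,k-1\}$, $$H_w(j)=\sum_{w'=\max\{j-w,0\}}^{\min\{j,k-w\}}\binom{j}{w'}\big\lceil L^{k-j}_{k-w-w',\,k-j}\big\rceil.$$ Given $\omega_1\in\mathbb{R}^k$, let $\mathcal{I}=\{j\in\{1,\ldots,k\}: h([\omega_1]_j)\le1\}$ and let $\omega_{1,\mathcal{I}^{\mathrm{c}}}$ be the subvector of $\omega_1$ indexed by $\{1,\ldots,k\}\setminus\mathcal{I}$. Then for all $\omega_1\in\mathbb{R}^k$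 and all $w\in\{0,\ldots,k-1\}$, $$G_{k-w}^k(\omega_1)\le H_w(|\mathcal{I}|)\,G^{k-|\mathcal{I}|}_{k-|\mathcal{I}|}(\omega_{1,\mathcal{I}^{\mathrm{c}}}).$$
   Context: $\mathcal{X}_s^n(\mathcal{U})$ is the set of vectors in $\mathbb{R}^n$ with exactly $s$ nonzero entries, each in $\mathcal{U}$. $\lceil\cdot\rceil$ is the ceiling. *)

(* Defs.v *)
From HB Require Import structures.
From mathcomp Require Import all_boot all_order all_algebra.
From mathcomp Require Import reals sequences exp.
Set Implicit Arguments. Unset Strict Implicit. Unset Printing Implicit Defensive.
Import Order.TTheory GRing.Theory Num.Theory.
Local Open Scope ring_scope.

Definition umax (R : realType) (U : seq R) : R := \big[Num.max/0]_(u <- U) `|u|.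

(* h(omega); s2 stands for sigma_{N/k}^2 *)
Definition hfun (R : realType) (U : seq R) (s2 : R) (om : R) : R :=
  \sum_(u <- U) expR (`|u| * umax U / s2 - u ^+ 2 / (2 * s2) + u * om / s2).

(* A vector of R^n whose entries are 0 or in U, encoded by choosing for each
   coordinate either None (entry 0) or an index into U. *)
Definition vec_of (R : realType) (U : seq R) (n : nat)
  (c : {ffun 'I_n -> option 'I_(size U)}) : 'I_n -> R :=
  fun i => if c i is Some m then nth 0 U m else 0.

(* G_s^n(omega_1): sum over X_s^n(U) (vectors with exactly s nonzero entries,
   each in U); G_0^n = 1. *)
Definition Gfun (R : realType) (U : seq R) (s2 : R) (n s : nat) (om : 'I_n -> R) : R :=
  if s == 0%N then 1 else
  \sum_(c : {ffun 'I_n -> option 'I_(size U)} | #|[set i | c i != None]| == s)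
    let x := vec_of c in
    expR ((umax U * (\sum_i `|x i|) - 2^-1 * (\sum_i x i ^+ 2)
           + \sum_i x i * om i) / s2).

Definition Lfun (R : realType) (n a b : nat) : R :=
  \prod_(i < b - a) ((b - i)%:R / (n - a - i)%:R).

Definition Hfun (R : realType) (k w j : nat) : R :=
  if w == 0%N then 1 else
  \sum_(maxn (j - w) 0 <= w' < (minn j (k - w)).+1)
     'C(j, w')%:R * (Num.ceil (Lfun R (k - j) (k - w - w') (k - j)))%:~R.

(* subvector of om indexed by the set A (in increasing order of indices) *)
Definition subvec (R : realType) (k : nat) (A : {set 'I_k}) (om : 'I_k -> R)
  : 'I_#|A| -> R := fun i => om (enum_val i).

Arguments Gfun {R} U s2 n s om.
Arguments subvec {R k} A om _.

(* Main.v *)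
Require Import Defs.
From HB Require Import structures.
From mathcomp Require Import all_boot all_order all_algebra.
From mathcomp Require Import reals sequences exp.
From mathcomp Require Import ring lra zify.
Import Order.TTheory GRing.Theory Num.Theory.
Local Open Scope ring_scope.

Lemma hfun_ge0 (R : realType) (U : seq R) s2 x : 0 <= hfun U s2 x.
Proof. rewrite /hfun; apply: sumr_ge0 => u _; exact: expR_ge0. Qed.

Lemma G_eq (R : realType) (U : seq R) s2 n s (om : 'I_n -> R) : s2 != 0 ->
  Gfun U s2 n s om =
  \sum_(S : {set 'I_n} | #|S| == s) \prod_(i in S) hfun U s2 (om i).
Proof.
move=> s20.
rewrite /Gfun; case: eqP => [-> | _].
  rewrite (big_pred1 set0); last by move=> S; rewrite /= cards_eq0.
  by rewrite big_set0.
pose psi (i : 'I_n) (o : option 'I_(size U)) : R :=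
  if o is Some m then `|nth 0 U m| * umax U / s2 - (nth 0 U m) ^+ 2 / (2 * s2)
     + nth 0 U m * om i / s2 else 0.
rewrite (eq_bigr (fun c : {ffun 'I_n -> option 'I_(size U)} => \prod_i expR (psi i (c i)))); last first.
  move=> c _ /=; rewrite -expR_sum; congr expR.
  rewrite !mulr_sumr -sumrN -!big_split mulr_suml /=.
  apply: eq_bigr => i _; rewrite /vec_of /psi; case: (c i) => [m|].
    by field.
  by rewrite normr0; field.
rewrite (partition_big (fun c : {ffun _} => [set i | c i != None])
   (fun S : {set 'I_n} => #|S| == s)) //.
apply: eq_bigr => S /eqP cardS.
transitivity (\prod_i \sum_(o | (o != None) == (i \in S)) expR (psi i o)).
  rewrite bigA_distr_big_dep; apply: eq_bigl => c.
  have famE : (c \in family (fun i o => (o != None) == (i \in S))) =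
     ([set i | c i != None] == S).
    apply/familyP/eqP => [H | SE i]; last first.
      by rewrite -SE !inE; exact: eqxx.
    apply/setP => i; have /eqP := H i.
    by rewrite inE.
  rewrite famE; case: ([set i | c i != None] =P S) => [-> | _]; last by rewrite andbF.
  by rewrite cardS eqxx.
rewrite [RHS]big_mkcond; apply: eq_bigr => i _; case: ifP => iS.
  rewrite (reindex_omap Some id) /=; last by case.
  rewrite (eq_bigl xpredT); last by move=> m; rewrite eqxx.
  rewrite /hfun (big_nth 0) big_mkord; apply: eq_bigr => m _.
  by rewrite /psi.
rewrite (big_pred1 None); last by case.
by rewrite /psi expR0.
Qed.

Lemma L_bin (R : realType) b a : (a <= b)%N -> Lfun R b a b = ('C(b, a))%:R.
Proof.
move=> ab; rewrite /Lfun prodf_div -!natr_prod.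
have -> : (\prod_(i < b - a) (b - a - i))%N = (b - a)`! by rewrite -ffactnn ffact_prod.
have -> : (\prod_(i < b - a) (b - i))%N = b ^_ (b - a) by rewrite ffact_prod.
rewrite -bin_ffact natrM mulfK ?pnatr_eq0 -?lt0n ?fact_gt0 //.
by rewrite bin_sub.
Qed.

Lemma ceil_nat (R : realType) (m : nat) : Num.ceil (m%:R : R) = m%:Z.
Proof. by rewrite pmulrn intrKceil. Qed.

Lemma H_ge (R : realType) k w j : (j <= k)%N -> (w < k)%N ->
  ('C(k, k - w))%:R <= Hfun R k w j.
Proof.
move=> jk wk; rewrite /Hfun; case: eqP => [-> | /eqP w0].
  by rewrite subn0 binn.
have -> : \sum_(maxn (j - w) 0 <= w' < (minn j (k - w)).+1)
    'C(j, w')%:R * (Num.ceil (Lfun R (k - j) (k - w - w') (k - j)))%:~R =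
    ((\sum_(maxn (j - w) 0 <= w' < (minn j (k - w)).+1)
       ('C(j, w') * 'C(k - j, k - w - w'))%N)%:R : R).
  rewrite natr_sum; apply: eq_big_nat => w' /andP [lo hi].
  rewrite L_bin; last by lia.
  by rewrite ceil_nat -pmulrn natrM.
rewrite ler_nat; apply: eq_leq.
have := binomial.Vandermonde j (k - j)%N (k - w)%N.
rewrite subnKC // => <-.
rewrite -(big_mkord xpredT (fun i => 'C(j, i) * 'C(k - j, k - w - i))%N).
rewrite (big_cat_nat _ (n := ((minn j (k - w)).+1)%N)) //=; last by lia.
rewrite [X in (_ + X)%N = _]big1_seq ?addn0; last first.
  move=> i /andP [_]; rewrite mem_index_iota => /andP [lo hi].
  have : (j < i)%N by lia.
  by move=> ji; rewrite bin_small.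
rewrite (big_cat_nat _ (n := (maxn (j - w) 0)%N)) //=; last by lia.
rewrite big1_seq //.
move=> i /andP [_]; rewrite mem_index_iota => /andP [lo hi].
by rewrite (@bin_small (k - j)%N (k - w - i)%N) ?muln0 //; lia.
Qed.

Theorem lemma5 (R : realType) (U : seq R) (s2 : R) (k : nat)
  (om : 'I_k -> R) (w : nat) :
  uniq U -> all (fun u => u != 0) U -> 0 < s2 -> (1 <= k)%N -> (w < k)%N ->
  let I := [set j : 'I_k | hfun U s2 (om j) <= 1] in
  Gfun U s2 k (k - w)%N om <=
    Hfun R k w #|I| * Gfun U s2 #|~: I| #|~: I| (subvec (~: I) om).
Proof.
move=> Uu Unz s2p k1 wk; cbv zeta.
set I := [set j : 'I_k | hfun U s2 (om j) <= 1].
have s20 : s2 != 0 by rewrite gt_eqF.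
rewrite !G_eq //.
set P := \prod_(i in ~: I) hfun U s2 (om i).
have -> : \sum_(S : {set 'I_#|~: I|} | #|S| == #|~: I|)
    \prod_(i in S) hfun U s2 (subvec (~: I) om i) = P.
  rewrite (big_pred1 setT); last first.
    move=> S /=; rewrite eqEcard subsetT /= cardsT card_ord eqn_leq.
    by have := max_card (mem S); rewrite card_ord => ->.
  rewrite /P (big_enum_val (fun i => hfun U s2 (om i))) /subvec.
  by apply: eq_bigl => i; rewrite inE.
have bound : forall S : {set 'I_k}, \prod_(i in S) hfun U s2 (om i) <= P.
  move=> S.
  pose m i := if i \in I then 1 else hfun U s2 (om i).
  have hm : forall i, hfun U s2 (om i) <= m i.
    by move=> i; rewrite /m; case: ifP => //; rewrite /I inE.
  have m1 : forall i, 1 <= m i.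
    move=> i; rewrite /m; case: ifP => //; rewrite /I inE => /negbT.
    by rewrite -ltNge => /ltW.
  apply: (@le_trans _ _ (\prod_(i in S) m i)).
    by apply: ler_prod => i _; rewrite hfun_ge0 hm.
  have -> : P = \prod_i m i.
    rewrite /P big_mkcond; apply: eq_bigr => i _; rewrite /m inE.
    by case: (i \in I).
  rewrite [X in _ <= X](bigID (mem S)) /=.
  apply: ler_peMr.
    by apply: prodr_ge0 => i _; apply: le_trans (m1 i).
  by apply: (big_ind (fun x => 1 <= x)) => // x y; apply: mulr_ege1.
apply: le_trans (ler_sum _ (fun S _ => bound S)) _.
rewrite (eq_bigl (fun S => S \in [set S : {set 'I_k} | #|S| == (k - w)%N]));
  last by move=> S; rewrite inE.
rewrite sumr_const card_draws card_ord -mulr_natl.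
apply: ler_wpM2r.
  by rewrite /P; apply: prodr_ge0 => i _; exact: hfun_ge0.
apply: H_ge => //.
by have := max_card (mem I); rewrite card_ord.
Qed.
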